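(* Let $k$ be a field, $G$ a finite group and $H=O_k(G)$ the Hopf algebra of $k$-valued functions on $G$. If the generic base algebra $\mathcal{B}_H$ is isomorphic as a $k$-algebra to a localization $T^{-1}k[x_1,\dots,x_m]$ of a polynomial algebra in finitely many variables (for some multiplicative subset $T$), then the field $k(t_g\mid g\in G)^G$ of $G$-invariant rational functions, where $t_g$ ($g\in G$) are independent indeterminates and $G$ acts by $k$-automorphisms via $h\cdot t_g=t_{hg}$, is a purely transcendental extension of $k$.
   Context: $O_k(G)$ has basis $\{e_g\}_{g\in G}$ ($e_g$ the indicator function of $g$), with pointwise multiplication, $\Delta(e_g)=\sum_{h\in G}e_{gh^{-1}}\otimes e_h$, $\varepsilon(e_g)=\delta_{g,1}$, $S(e_g)=e_{g^{-1}}$. For a Hopf algebra $H$ with Sweedler notation $\Delta(x)=x_1\otimes x_2$: let $\{\tau_x: x\in H\}$ be a copy of the vector space $H$, $S(\tau_H)$ its symmetric algebra, and $x\mapsto \tau^{-1}_x$ the unique linear map from $H$ to $\mathrm{Frac}\,S(\tau_H)$ with $\tau_{x_1}\tau^{-1}_{x_2}=\tau^{-1}_{x_1}\tau_{x_2}=\varepsilon(x)1$. The generic base algebra $\mathcal{B}_H$ is the subalgebra of $\mathrm{Frac}\,S(\tau_H)$ generated by all $\sigma(x,y)=\tau_{x_1}\tau_{y_1}\tau^{-1}_{x_2y_2}$ and $\sigma^{-1}(x,y)=\tau_{x_1y_1}\tau^{-1}_{x_2}\tau^{-1}_{y_2}$, $x,y\in H$. *)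

(* Defs.v *)
From HB Require Import structures.
From mathcomp Require Import all_boot all_order all_algebra all_fingroup.
From mathcomp Require Import fraction.
From mathcomp Require Import mpoly.
From Stdlib Require Import ClassicalEpsilon.

Set Implicit Arguments.
Unset Strict Implicit.
Unset Printing Implicit Defensive.

Import GRing.Theory.
Local Open Scope ring_scope.

Definition ratfun (k : fieldType) (m : nat) := {fraction {mpoly k[m]}}.

Definition kconst (k : fieldType) (m : nat) (c : k) : ratfun k m :=
  tofrac (c%:MP_[m]).

Definition kalg_iso (k : fieldType) (K1 K2 : nzRingType)
    (i1 : k -> K1) (i2 : k -> K2) (A : K1 -> Prop) (B : K2 -> Prop)
    (f : K1 -> K2) : Prop :=
  [/\ (forall x, A x -> B (f x)),
      (forall x y, A x -> A y -> f x = f y -> x = y),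
      (forall z, B z -> exists2 x, A x & f x = z),
      f 1 = 1 &
      forall x y c, A x -> A y ->
        [/\ f (x + y) = f x + f y, f (x * y) = f x * f y &
            f (i1 c * x) = i2 c * f x]].

Definition is_ksubalg (k : fieldType) (K : nzRingType) (i : k -> K)
    (A : K -> Prop) : Prop :=
  [/\ A 1,
      (forall x y, A x -> A y -> A (x + y)),
      (forall x y, A x -> A y -> A (x * y)) &
      (forall c x, A x -> A (i c * x))].

Definition ksubalg_gen (k : fieldType) (K : nzRingType) (i : k -> K)
    (S : K -> Prop) : K -> Prop :=
  fun z => forall A, is_ksubalg i A -> (forall s, S s -> A s) -> A z.

(* Localization T^{-1} k[x_1..x_m] of the polynomial algebra at a
   multiplicative subset T (0 \notin T), realised inside k(x_1..x_m). *)
Definition mult_subset (k : fieldType) (m : nat) (T : {mpoly k[m]} -> Prop) :=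
  [/\ T 1, (forall s t, T s -> T t -> T (s * t)) & ~ T 0].

Definition localization (k : fieldType) (m : nat) (T : {mpoly k[m]} -> Prop)
  : ratfun k m -> Prop :=
  fun z => exists p t, T t /\ z = tofrac p / tofrac t.

Definition purely_transcendental (k : fieldType) (K : nzRingType)
    (i : k -> K) (L : K -> Prop) : Prop :=
  exists (r : nat) (phi : ratfun k r -> K),
    kalg_iso (@kconst k r) i (fun _ => True) L phi.

Section GenericBase.
Variables (k : fieldType) (gT : finGroupType).

(* Frac S(tau_H): S(tau_H) = k[tau_{e_g} | g in G], variables indexed by
   enum_rank g. *)
Definition Ktau := ratfun k #|gT|.

Definition tau (g : gT) : Ktau := tofrac ('X_(enum_rank g)).

(* Defining property of tau^{-1}, on the basis {e_g}:
   Delta(e_g) = sum_h e_{g h^-1} (x) e_h, eps(e_g) = [g == 1]. *)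
Definition is_tauinv (f : gT -> Ktau) : Prop :=
  (forall g : gT, \sum_(h : gT) tau (g * h^-1)%g * f h = (g == 1%g)%:R) /\
  (forall g : gT, \sum_(h : gT) f (g * h^-1)%g * tau h = (g == 1%g)%:R).

(* The (unique) such map: tauinv g := tau^{-1}_{e_g}. *)
Definition tauinv : gT -> Ktau :=
  epsilon (inhabits (fun _ => 0)) is_tauinv.

(* sigma(e_a, e_b) = tau_{(e_a)_1} tau_{(e_b)_1} tau^{-1}_{(e_a)_2 (e_b)_2} *)
Definition sigma_e (a b : gT) : Ktau :=
  \sum_(h : gT) tau (a * h^-1)%g * tau (b * h^-1)%g * tauinv h.

(* sigma^{-1}(e_a, e_b) = tau_{(e_a)_1 (e_b)_1} tau^{-1}_{(e_a)_2} tau^{-1}_{(e_b)_2} *)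
Definition sigmainv_e (a b : gT) : Ktau :=
  \sum_(h : gT) \sum_(l : gT)
     (if (a * h^-1)%g == (b * l^-1)%g then tau (a * h^-1)%g * tauinv h * tauinv l
      else 0).

(* Elements of H = O_k(G) are functions x : G -> k, x = sum_g x(g) e_g;
   sigma, sigma^{-1} extended bilinearly. *)
Definition sigma (x y : {ffun gT -> k}) : Ktau :=
  \sum_(a : gT) \sum_(b : gT) kconst #|gT| (x a) * kconst #|gT| (y b) * sigma_e a b.

Definition sigmainv (x y : {ffun gT -> k}) : Ktau :=
  \sum_(a : gT) \sum_(b : gT) kconst #|gT| (x a) * kconst #|gT| (y b) * sigmainv_e a b.

Definition generic_base_algebra : Ktau -> Prop :=
  ksubalg_gen (@kconst k #|gT|)
    (fun z => exists x y, z = sigma x y \/ z = sigmainv x y).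

(* k(t_g | g in G); t_g is the variable of index enum_rank g. *)
Definition Kt := ratfun k #|gT|.

(* h . t_g = t_{hg}, as a k-algebra endomorphism of k[t_g | g in G]. *)
Definition act_poly (h : gT) (p : {mpoly k[#|gT|]}) : {mpoly k[#|gT|]} :=
  comp_mpoly [tuple 'X_(enum_rank (h * enum_val i)%g) | i < #|gT|] p.

Definition act (h : gT) (f : Kt) : Kt :=
  let r := generic_quotient.repr f in tofrac (act_poly h \n_r) / tofrac (act_poly h \d_r).

Definition invariant_field : Kt -> Prop := fun f => forall h : gT, act h f = f.

End GenericBase.

(* Main.v *)
Require Import Defs.
From HB Require Import structures.
From mathcomp Require Import all_boot all_order all_algebra all_fingroup.
From mathcomp Require Import fraction.
From mathcomp Require Import mpoly.
From mathcomp Require Import generic_quotient.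
From Stdlib Require Import ClassicalEpsilon.
Require Import Defs.
Set Implicit Arguments.
Unset Strict Implicit.
Unset Printing Implicit Defensive.
Import GRing.Theory.
Local Open Scope ring_scope.

Open Scope quotient_scope.

Section FracGen.
Variable R : idomainType.
Lemma fracE (x : {fraction R}) :
  x = tofrac \n_(repr x) / tofrac \d_(repr x).
Proof.
have hd : tofrac \d_(repr x) != 0 by rewrite tofrac_eq0 denom_ratioP.
apply: (canRL (mulfK hd)).
rewrite -{1}[x]reprK.
rewrite /tofrac /= /FracField.tofrac.
unlock.
change (FracField.mul (\pi_{fraction R} (repr x)) (\pi_{fraction R} (Ratio \d_(repr x) 1)) = \pi_{fraction R} (Ratio \n_(repr x) 1)).
rewrite -FracField.pi_mul.
apply/eqmodP.
rewrite /FracField.mulf.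
have h1 : (1 : R) != 0 by exact: oner_neq0.
have h2 : \d_(repr x) * 1 != 0 by rewrite mulr1 denom_ratioP.
change (FracField.equivf (Ratio (\n_(repr x) * \n_(Ratio \d_(repr x) 1)) (\d_(repr x) * \d_(Ratio \d_(repr x) 1))) (Ratio \n_(repr x) 1)).
rewrite FracField.equivfE.
set d := \d_(repr x) in h2 *; set n := \n_(repr x).
rewrite (numer_Ratio d h1) (denom_Ratio d h1) (numer_Ratio n h1) (denom_Ratio n h1).
rewrite (numer_Ratio _ h2) (denom_Ratio _ h2).
by rewrite !mulr1 mulrC.
Qed.

Lemma repr_den (x : {fraction R}) : \d_(repr x) != 0.
Proof. exact: denom_ratioP. Qed.

Lemma frac_ex (x : {fraction R}) : exists n d, d != 0 /\ x = tofrac n / tofrac d.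
Proof. exists \n_(repr x), \d_(repr x); split; [exact: repr_den | exact: fracE]. Qed.

Lemma tofrac_inj : injective (@tofrac R).
Proof. by move=> a b /eqP; rewrite tofrac_eq => /eqP. Qed.

Variable F : fieldType.
Variable g : R -> F.
Hypothesis gD : forall x y, g (x + y) = g x + g y.
Hypothesis gM : forall x y, g (x * y) = g x * g y.
Hypothesis g1 : g 1 = 1.
Hypothesis ginj : injective g.

Lemma g0 : g 0 = 0.
Proof. by apply: (@addrI _ (g 0)); rewrite -gD !addr0. Qed.

Lemma gnz q : q != 0 -> g q != 0.
Proof. by apply: contra => /eqP h; apply/eqP; apply: ginj; rewrite h g0. Qed.

Definition liftf (x : {fraction R}) : F :=
  let r := repr x in g \n_r / g \d_r.

Lemma liftf_frac p q : q != 0 -> liftf (tofrac p / tofrac q) = g p / g q.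
Proof.
move=> q0; rewrite /liftf.
set x := tofrac p / tofrac q.
have hx := fracE x.
have d0 := repr_den x.
set n := \n_(repr x) in hx *; set d := \d_(repr x) in hx d0 *.
have tq : tofrac q != 0 by rewrite tofrac_eq0.
have td : tofrac d != 0 by rewrite tofrac_eq0.
have e : p * d = n * q.
  apply: tofrac_inj; rewrite !tofracM.
  have : tofrac p / tofrac q = tofrac n / tofrac d by rewrite -hx.
  move/eqP; rewrite eqr_div // => /eqP; done.
have gq := gnz q0; have gd := gnz d0.
have e' : g p * g d = g n * g q by rewrite -!gM e.
apply/eqP; rewrite eqr_div //; apply/eqP; by rewrite e' mulrC.
Qed.

Lemma liftf_tofrac p : liftf (tofrac p) = g p.
Proof.
have h : tofrac p = tofrac p / tofrac (1 : R) by rewrite tofrac1 divr1.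
by rewrite h liftf_frac ?oner_neq0 // g1 divr1.
Qed.

Lemma liftfD x y : liftf (x + y) = liftf x + liftf y.
Proof.
have [a [b [b0 ->]]] := frac_ex x.
have [c [d [d0 ->]]] := frac_ex y.
have bd0 : b * d != 0 by rewrite mulf_neq0.
have tb : tofrac b != 0 by rewrite tofrac_eq0.
have td : tofrac d != 0 by rewrite tofrac_eq0.
have -> : tofrac a / tofrac b + tofrac c / tofrac d =
  tofrac (a * d + c * b) / tofrac (b * d).
  by rewrite tofracD !tofracM addf_div.
rewrite !liftf_frac // gD !gM.
have gb := gnz b0; have gd := gnz d0.
by rewrite addf_div.
Qed.

Lemma liftfM x y : liftf (x * y) = liftf x * liftf y.
Proof.
have [a [b [b0 ->]]] := frac_ex x.
have [c [d [d0 ->]]] := frac_ex y.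
have bd0 : b * d != 0 by rewrite mulf_neq0.
have -> : tofrac a / tofrac b * (tofrac c / tofrac d) =
  tofrac (a * c) / tofrac (b * d).
  by rewrite !tofracM mulf_div.
by rewrite !liftf_frac // !gM mulf_div.
Qed.

Lemma liftf1 : liftf 1 = 1.
Proof. by rewrite -tofrac1 liftf_tofrac. Qed.

Lemma liftf0 : liftf 0 = 0.
Proof. by rewrite -tofrac0 liftf_tofrac g0. Qed.

Lemma liftf_inj : injective liftf.
Proof.
move=> x y.
have [a [b [b0 ->]]] := frac_ex x.
have [c [d [d0 ->]]] := frac_ex y.
rewrite !liftf_frac //.
have gb := gnz b0; have gd := gnz d0.
move/eqP; rewrite eqr_div // -!gM => /eqP /ginj e.
have tb : tofrac b != 0 by rewrite tofrac_eq0.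
have td : tofrac d != 0 by rewrite tofrac_eq0.
by apply/eqP; rewrite eqr_div // -!tofracM e.
Qed.

Lemma liftfV x : liftf (x^-1) = (liftf x)^-1.
Proof.
have [->|x0] := eqVneq x 0; first by rewrite invr0 liftf0 invr0.
have h : liftf x * liftf x^-1 = 1 by rewrite -liftfM mulfV // liftf1.
have lx : liftf x != 0.
  apply: contra x0 => /eqP h0; apply/eqP; apply: liftf_inj; by rewrite h0 liftf0.
by rewrite -[LHS]mul1r -(mulVf lx) -mulrA h mulr1.
Qed.

End FracGen.

Close Scope quotient_scope.

Lemma comp_mpolyA (n k l : nat) (R : comNzRingType) (p : {mpoly R[n]})
   (t1 : n.-tuple {mpoly R[k]}) (t2 : k.-tuple {mpoly R[l]}) :
  (p \mPo t1) \mPo t2 = p \mPo [tuple (tnth t1 i \mPo t2) | i < n].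
Proof.
elim/mpolyind: p => [|c m p _ _ IH]; first by rewrite !comp_mpoly0.
rewrite !comp_mpolyD !comp_mpolyZ IH; congr (_ *: _ + _).
rewrite !comp_mpolyX rmorph_prod; apply: eq_bigr => i _.
by rewrite rmorphXn tnth_mktuple.
Qed.

Section Perm.
Variables (k : fieldType) (gT : finGroupType).
Local Notation n := #|gT|.
Local Notation K := (Ktau k gT).

Definition permp (s : gT -> gT) (p : {mpoly k[n]}) : {mpoly k[n]} :=
  comp_mpoly [tuple 'X_(enum_rank (s (enum_val i))) | i < n] p.

Lemma permpD s x y : permp s (x + y) = permp s x + permp s y.
Proof. by rewrite /permp rmorphD. Qed.
Lemma permpM s x y : permp s (x * y) = permp s x * permp s y.
Proof. by rewrite /permp rmorphM. Qed.
Lemma permp1 s : permp s 1 = 1.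
Proof. by rewrite /permp rmorph1. Qed.
Lemma permpC s c : permp s c%:MP = c%:MP.
Proof. by rewrite /permp comp_mpolyC. Qed.
Lemma permpX s g : permp s 'X_(enum_rank g) = 'X_(enum_rank (s g)).
Proof. by rewrite /permp comp_mpolyXU -tnth_nth tnth_mktuple enum_rankK. Qed.
Lemma permp_ext s s' p : s =1 s' -> permp s p = permp s' p.
Proof. by move=> e; rewrite /permp; congr comp_mpoly; apply: eq_mktuple => i; rewrite e. Qed.
Lemma permp_id p : permp id p = p.
Proof.
rewrite /permp -[RHS]comp_mpoly_id; congr comp_mpoly.
by apply: eq_mktuple => i; rewrite enum_valK.
Qed.
Lemma permp_comp s s' p : permp s (permp s' p) = permp (fun x => s (s' x)) p.
Proof.
rewrite {1}/permp /permp comp_mpolyA; congr comp_mpoly.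
apply: eq_mktuple => i; rewrite tnth_mktuple.
by have := permpX s (s' (enum_val i)); rewrite /permp.
Qed.
Lemma permpK s s' : cancel s s' -> cancel (permp s) (permp s').
Proof. move=> sK p; rewrite permp_comp (permp_ext _ sK); exact: permp_id. Qed.
Lemma permp_inj s s' : cancel s s' -> injective (permp s).
Proof. move=> sK; exact: can_inj (permpK sK). Qed.

Definition pf s (p : {mpoly k[n]}) : K := tofrac (permp s p).
Definition E s (x : K) : K := liftf (pf s) x.

Section WithInv.
Variables (s s' : gT -> gT).
Hypothesis sK : cancel s s'.
Let pfD : forall x y, pf s (x + y) = pf s x + pf s y.
Proof. by move=> x y; rewrite /pf permpD tofracD. Qed.
Let pfM : forall x y, pf s (x * y) = pf s x * pf s y.
Proof. by move=> x y; rewrite /pf permpM tofracM. Qed.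
Let pf1 : pf s 1 = 1.
Proof. by rewrite /pf permp1 tofrac1. Qed.
Let pfI : injective (pf s).
Proof. by move=> x y /tofrac_inj /(permp_inj sK). Qed.

Lemma ED x y : E s (x + y) = E s x + E s y.
Proof. exact: liftfD. Qed.
Lemma EM x y : E s (x * y) = E s x * E s y.
Proof. exact: liftfM. Qed.
Lemma E1 : E s 1 = 1.
Proof. exact: liftf1. Qed.
Lemma E0 : E s 0 = 0.
Proof. exact: liftf0. Qed.
Lemma EV x : E s x^-1 = (E s x)^-1.
Proof. exact: liftfV. Qed.
Lemma E_inj : injective (E s).
Proof. exact: liftf_inj. Qed.
Lemma E_tofrac p : E s (tofrac p) = tofrac (permp s p).
Proof. exact: liftf_tofrac. Qed.
Lemma E_frac p q : q != 0 -> E s (tofrac p / tofrac q) = tofrac (permp s p) / tofrac (permp s q).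
Proof. exact: liftf_frac. Qed.
Lemma E_tau g : E s (tau k g) = tau k (s g).
Proof. by rewrite /tau E_tofrac permpX. Qed.
Lemma E_kconst c : E s (kconst n c) = kconst n c.
Proof. by rewrite /kconst E_tofrac permpC. Qed.
Lemma E_sum (I : Type) (r : seq I) (P : pred I) (F : I -> K) :
  E s (\sum_(i <- r | P i) F i) = \sum_(i <- r | P i) E s (F i).
Proof. exact: (big_morph _ ED E0). Qed.
Lemma E_nat (b : bool) : E s (b%:R) = b%:R.
Proof. by case: b; rewrite ?E1 ?E0. Qed.
Lemma E_div x y : E s (x / y) = E s x / E s y.
Proof. by rewrite EM EV. Qed.
End WithInv.

Lemma E_invK x : E invg (E invg x) = x.
Proof.
have [a [b [b0 ->]]] := frac_ex x.
have iK : cancel (@invg gT) invg by exact: invgK.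
rewrite (E_frac iK) // (E_frac iK); last by apply: contra b0 => /eqP h; apply/eqP; apply: (permp_inj iK); rewrite h /permp rmorph0.
by rewrite !(permpK iK).
Qed.

Lemma act_E h x : act h x = E (fun g => h * g)%g x.
Proof. by []. Qed.

End Perm.

Section Conv.
Variables (k : fieldType) (gT : finGroupType).
Local Notation n := #|gT|.
Local Notation K := (Ktau k gT).
Local Notation T := (@tau k gT).

Definition conv (u v : gT -> K) : gT -> K :=
  fun g => \sum_(h : gT) u (g * h^-1)%g * v h.
Definition d1 : gT -> K := fun g => (g == 1%g)%:R.

Lemma conv_ext u u' v v' : u =1 u' -> v =1 v' -> conv u v =1 conv u' v'.
Proof. by move=> eu ev g; apply: eq_bigr => h _; rewrite eu ev. Qed.

Lemma conv_assoc u v w : conv (conv u v) w =1 conv u (conv v w).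
Proof.
move=> g; rewrite /conv.
under eq_bigr => h _ do rewrite mulr_suml.
under [RHS]eq_bigr => h _ do rewrite mulr_sumr.
rewrite [RHS]exchange_big /=.
apply: eq_bigr => h _.
rewrite [RHS](reindex_inj (@mulIg _ h)) /=.
apply: eq_bigr => l _.
by rewrite mulgK invMg mulgA mulrA.
Qed.

Lemma conv_d1r u : conv u d1 =1 u.
Proof.
move=> g; rewrite /conv /d1 (bigD1 1%g) //= eqxx invg1 mulg1 mulr1 big1 ?addr0 //.
by move=> h /negbTE ->; rewrite mulr0.
Qed.

Lemma conv_d1l u : conv d1 u =1 u.
Proof.
move=> g; rewrite /conv /d1 (bigD1 g) //= mulgV eqxx mul1r big1 ?addr0 //.
by move=> h hg; rewrite -eq_mulgV1 eq_sym (negbTE hg) mul0r.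
Qed.

Definition colv (u : gT -> K) : 'cV[K]_n := \col_j u (enum_val j).
Definition GM : 'M[K]_n := \matrix_(i, j) T (enum_val i * (enum_val j)^-1)%g.
Definition GMp : 'M[{mpoly k[n]}]_n :=
  \matrix_(i, j) 'X_(enum_rank (enum_val i * (enum_val j)^-1)%g).

Lemma sum_enum (F : gT -> K) : \sum_(h : gT) F h = \sum_(j < n) F (enum_val j).
Proof. exact: (reindex _ (onW_bij _ (enum_val_bij gT))). Qed.

Lemma colv_conv u : colv (conv T u) = GM *m colv u.
Proof.
apply/matrixP => i j; rewrite !mxE /conv sum_enum; apply: eq_bigr => l _.
by rewrite !mxE.
Qed.

Lemma GM_map : GM = map_mx (@tofrac _) GMp.
Proof. by apply/matrixP => i j; rewrite !mxE. Qed.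

Lemma GM_unit : GM \in unitmx.
Proof.
rewrite unitmxE unitfE GM_map det_map_mx tofrac_eq0.
pose v := fun i : 'I_n => ((enum_val i == 1%g)%:R : k).
apply/eqP => h0.
have : meval v (\det GMp) = 1.
  rewrite -det_map_mx -[RHS](det1 k n); congr (\det _).
  apply/matrixP => i j; rewrite !mxE; rewrite [LHS]mevalXU /v enum_rankK -eq_mulgV1.
  by rewrite (inj_eq enum_val_inj).
by rewrite h0 meval0 => /eqP; rewrite eq_sym oner_eq0.
Qed.

Lemma colvK u g : colv u (enum_rank g) 0 = u g.
Proof. by rewrite mxE enum_rankK. Qed.

Lemma conv_inj u v : conv T u =1 conv T v -> u =1 v.
Proof.
move=> e.
have : colv (conv T u) = colv (conv T v) by apply/matrixP => i j; rewrite !mxE e.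
rewrite !colv_conv => /(congr1 (mulmx (invmx GM))); rewrite !mulKmx ?GM_unit // => ec g.
by rewrite -colvK ec colvK.
Qed.

Lemma tauinv_exists : exists f, @is_tauinv k gT f.
Proof.
pose f1 := fun g : gT => (invmx GM *m colv d1) (enum_rank g) 0.
have cf : colv f1 = invmx GM *m colv d1.
  by apply/matrixP => i j; rewrite ord1 [LHS]mxE /f1 enum_valK.
have R1 : conv T f1 =1 d1.
  move=> g; rewrite -colvK colv_conv cf mulKVmx ?GM_unit // colvK //.
have R2 : conv f1 T =1 d1.
  apply: conv_inj => g.
  rewrite -conv_assoc (conv_ext R1 (frefl _)) conv_d1l.
  by rewrite conv_d1r.
by exists f1; split => g; [exact: R1 | exact: R2].
Qed.

Local Notation Y := (@tauinv k gT).

Lemma tauinv_spec : @is_tauinv k gT Y.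
Proof. exact: (epsilon_spec _ _ tauinv_exists). Qed.

Lemma YR : conv T Y =1 d1.
Proof. by move=> g; have [h _] := tauinv_spec; exact: h. Qed.
Lemma YL : conv Y T =1 d1.
Proof. by move=> g; have [_ h] := tauinv_spec; exact: h. Qed.

End Conv.

Section LfGen.
Variables (F : fieldType) (B : F -> Prop).
Hypotheses (B1 : B 1) (BD : forall x y, B x -> B y -> B (x + y)) (BM : forall x y, B x -> B y -> B (x * y)) (B0 : B 0).
Definition Lfg (z : F) := exists p q, B p /\ B q /\ q != 0 /\ z = p / q.
Lemma Lfg_B z : B z -> Lfg z.
Proof. by move=> h; exists z, 1; split; [|split; [exact: B1|split; [exact: oner_neq0|rewrite divr1]]]. Qed.
Lemma Lfg0 : Lfg 0. Proof. exact: Lfg_B B0. Qed.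
Lemma Lfg1 : Lfg 1. Proof. exact: Lfg_B B1. Qed.
Lemma LfgD x y : Lfg x -> Lfg y -> Lfg (x + y).
Proof.
move=> [p [q [hp [hq [q0 ->]]]]] [p' [q' [hp' [hq' [q0' ->]]]]].
exists (p * q' + p' * q), (q * q'); split; first by apply: BD; apply: BM.
split; first exact: BM.
split; first by rewrite mulf_neq0.
by rewrite addf_div.
Qed.
Lemma LfgM x y : Lfg x -> Lfg y -> Lfg (x * y).
Proof.
move=> [p [q [hp [hq [q0 ->]]]]] [p' [q' [hp' [hq' [q0' ->]]]]].
exists (p * p'), (q * q'); split; first exact: BM.
split; first exact: BM.
split; first by rewrite mulf_neq0.
by rewrite mulf_div.
Qed.
Lemma LfgV x : Lfg x -> Lfg (x^-1).
Proof.
move=> [p [q [hp [hq [q0 ->]]]]].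
have [->|p0] := eqVneq p 0; first by rewrite mul0r invr0; exact: Lfg0.
exists q, p; split; first exact: hq.
split; first exact: hp.
split; first exact: p0.
by rewrite invf_div.
Qed.
Lemma Lfg_div x y : Lfg x -> Lfg y -> Lfg (x / y).
Proof. by move=> hx hy; apply: LfgM => //; exact: LfgV. Qed.
Lemma Lfg_sum (I : Type) (r : seq I) (P : pred I) (G : I -> F) :
  (forall i, P i -> Lfg (G i)) -> Lfg (\sum_(i <- r | P i) G i).
Proof. by move=> h; apply: big_ind => //; [exact: Lfg0 | exact: LfgD]. Qed.
End LfGen.


Section Core.
Variables (k : fieldType) (gT : finGroupType).
Local Notation n := #|gT|.
Local Notation K := (Ktau k gT).
Local Notation T := (@tau k gT).
Local Notation Y := (@tauinv k gT).
Local Notation B := (@generic_base_algebra k gT).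
Local Notation kc := (@kconst k n).
Local Notation se := (@sigma_e k gT).

Lemma kcD a b : kc (a + b) = kc a + kc b.
Proof. by rewrite /kconst rmorphD tofracD. Qed.
Lemma kcM a b : kc (a * b) = kc a * kc b.
Proof. by rewrite /kconst rmorphM tofracM. Qed.
Lemma kc1 : kc 1 = 1.
Proof. by rewrite /kconst mpolyC1 tofrac1. Qed.
Lemma kc0 : kc 0 = 0.
Proof. by rewrite /kconst mpolyC0 tofrac0. Qed.
Lemma kc_nat (b : bool) : kc b%:R = b%:R.
Proof. by case: b; rewrite ?kc1 ?kc0. Qed.

Lemma B_sub : is_ksubalg (@kconst k n) B.
Proof.
split.
- by move=> A [h1 _ _ _] _.
- by move=> x y hx hy A hA hS; case: (hA) => _ hD _ _; apply: hD; [exact: hx | exact: hy].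
- by move=> x y hx hy A hA hS; case: (hA) => _ _ hM _; apply: hM; [exact: hx | exact: hy].
- by move=> c x hx A hA hS; case: (hA) => _ _ _ hZ; apply: hZ; exact: hx.
Qed.

Lemma B1 : B 1. Proof. by case: B_sub. Qed.
Lemma BD x y : B x -> B y -> B (x + y). Proof. by case: B_sub => _ h _ _; exact: h. Qed.
Lemma BM x y : B x -> B y -> B (x * y). Proof. by case: B_sub => _ _ h _; exact: h. Qed.
Lemma BZ c x : B x -> B (kc c * x). Proof. by case: B_sub => _ _ _ h; exact: h. Qed.
Lemma B_kc c : B (kc c). Proof. by rewrite -[kc c]mulr1; apply: BZ; exact: B1. Qed.
Lemma B0 : B 0. Proof. by rewrite -kc0; exact: B_kc. Qed.
Lemma B_sum (I : Type) (r : seq I) (P : pred I) (F : I -> K) :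
  (forall i, P i -> B (F i)) -> B (\sum_(i <- r | P i) F i).
Proof. by move=> h; apply: big_ind => //; [exact: B0 | exact: BD]. Qed.

Lemma B_sigma x y : B (sigma x y).
Proof. by move=> A _ hS; apply: hS; exists x, y; left. Qed.
Lemma B_sigmainv x y : B (sigmainv x y).
Proof. by move=> A _ hS; apply: hS; exists x, y; right. Qed.

Lemma sum_pick (F : gT -> K) a : \sum_(x : gT) (x == a)%:R * F x = F a.
Proof.
rewrite (bigD1 a) //= eqxx mul1r big1 ?addr0 //.
by move=> x /negbTE ->; rewrite mul0r.
Qed.

Lemma B_sigma_e a b : B (se a b).
Proof.
have := B_sigma [ffun x => ((x == a)%:R : k)] [ffun x => ((x == b)%:R : k)].
rewrite /sigma.
have -> : \sum_a0 \sum_b0 kc ([ffun x => ((x == a)%:R : k)] a0) * kc ([ffun x => ((x == b)%:R : k)] b0) * se a0 b0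
   = se a b.
  under eq_bigr => a0 _ do under eq_bigr => b0 _ do rewrite !ffunE !kc_nat -mulrA.
  under eq_bigr => a0 _ do rewrite -mulr_sumr sum_pick.
  by rewrite sum_pick.
done.
Qed.

Local Notation Lf := (Lfg B).
Lemma Lf_B z : B z -> Lf z. Proof. move=> h; apply: (@Lfg_B _ B B1); exact: h. Qed.
Lemma Lf0 : Lf 0. Proof. apply: (@Lfg0 _ B B1 B0). Qed.
Lemma Lf1 : Lf 1. Proof. apply: (@Lfg1 _ B B1). Qed.
Lemma LfD x y : Lf x -> Lf y -> Lf (x + y). Proof. move=> hx hy; apply: (@LfgD _ B BD BM); [exact: hx|exact: hy]. Qed.
Lemma LfM x y : Lf x -> Lf y -> Lf (x * y). Proof. move=> hx hy; apply: (@LfgM _ B BM); [exact: hx|exact: hy]. Qed.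
Lemma LfV x : Lf x -> Lf (x^-1). Proof. move=> hx; apply: (@LfgV _ B B1 B0); exact: hx. Qed.
Lemma Lf_div x y : Lf x -> Lf y -> Lf (x / y). Proof. by move=> hx hy; apply: LfM => //; apply: LfV. Qed.
Lemma Lf_sum (I : Type) (r : seq I) (P : pred I) (G : I -> K) :
  (forall i, P i -> Lf (G i)) -> Lf (\sum_(i <- r | P i) G i).
Proof. by move=> h; apply: big_ind => //; [exact: Lf0 | exact: LfD]. Qed.

Definition Ssum : K := \sum_(g : gT) T g.

Lemma sum_shift (F : gT -> K) h : \sum_(b : gT) F (b * h^-1)%g = \sum_(b : gT) F b.
Proof. by rewrite (reindex_inj (@mulIg _ h)) /=; apply: eq_bigr => b _; rewrite mulgK. Qed.

Lemma Ssum_sigma : \sum_(b : gT) se 1%g b = Ssum.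
Proof.
rewrite /sigma_e exchange_big /=.
have e : forall h : gT, \sum_(b : gT) T (1 * h^-1)%g * T (b * h^-1)%g * Y h
   = Ssum * (T (1 * h^-1)%g * Y h).
  move=> h; rewrite -mulr_suml -mulr_sumr sum_shift -/Ssum.
  by rewrite [_ * Ssum]mulrC -mulrA.
under eq_bigr => h _ do rewrite e.
rewrite -mulr_sumr.
have := @YR k gT 1%g; rewrite /conv /d1 eqxx => ->.
by rewrite mulr1.
Qed.

Lemma B_Ssum : B Ssum.
Proof. rewrite -Ssum_sigma; apply: B_sum => b _; exact: B_sigma_e. Qed.

Lemma Ssum_nz : Ssum != 0.
Proof.
have : \sum_(g : gT) conv T Y g = 1.
  rewrite (eq_bigr _ (fun g _ => @YR k gT g)) /d1 (bigD1 1%g) //= eqxx big1 ?addr0 //.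
  by move=> g /negbTE ->.
rewrite /conv exchange_big /=.
under eq_bigr => h _ do rewrite -mulr_suml sum_shift -/Ssum.
rewrite -mulr_sumr => h.
by apply/eqP => h0; move: h; rewrite h0 mul0r => /eqP; rewrite eq_sym oner_eq0.
Qed.

Lemma qrel a b : T a * T b = \sum_(l : gT) se (a * l^-1)%g (b * l^-1)%g * T l.
Proof.
rewrite /sigma_e.
under [RHS]eq_bigr => l _ do rewrite mulr_suml.
rewrite [RHS]exchange_big /=.
have e : forall h : gT,
  \sum_(l : gT) T (a * l^-1 * h^-1)%g * T (b * l^-1 * h^-1)%g * Y h * T l =
  \sum_(l : gT) T (a * l^-1)%g * T (b * l^-1)%g * (Y h * T (h^-1 * l)%g).
  move=> h; rewrite (reindex_inj (@mulgI _ (h^-1)%g)) /=.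
  apply: eq_bigr => l _.
  by rewrite invMg invgK !mulgA !mulgK !mulrA.
under eq_bigr => h _ do rewrite e.
rewrite exchange_big /=.
under eq_bigr => l _ do rewrite -mulr_sumr.
have e2 : forall l : gT, \sum_(h : gT) Y h * T (h^-1 * l)%g = @d1 k gT l.
  move=> l; rewrite -(@YL k gT l) /conv.
  rewrite [RHS](reindex_inj (inj_comp (@mulIg _ l) (@invg_inj gT))) /=.
  apply: eq_bigr => h _.
  by rewrite invMg invgK mulgA mulgV mul1g.
under eq_bigr => l _ do rewrite e2.
rewrite /d1 (bigD1 1%g) //= eqxx invg1 !mulg1 mulr1 big1 ?addr0 //.
by move=> l /negbTE ->; rewrite mulr0.
Qed.

Definition Wp (z : K) := exists w : gT -> K, (forall h, Lf (w h)) /\ z = \sum_(h : gT) w h * T h.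

Lemma Wp0 : Wp 0.
Proof. exists (fun _ => 0); split => [h|]; first exact: Lf0. by rewrite big1 // => h _; rewrite mul0r. Qed.
Lemma WpD x y : Wp x -> Wp y -> Wp (x + y).
Proof.
move=> [w [hw ->]] [w' [hw' ->]]; exists (fun h => w h + w' h); split.
  by move=> h; apply: LfD.
by rewrite -big_split /=; apply: eq_bigr => h _; rewrite mulrDl.
Qed.
Lemma WpL x z : Lf x -> Wp z -> Wp (x * z).
Proof.
move=> hx [w [hw ->]]; exists (fun h => x * w h); split.
  by move=> h; apply: LfM.
by rewrite mulr_sumr; apply: eq_bigr => h _; rewrite mulrA.
Qed.
Lemma Wp_sum (I : Type) (r : seq I) (P : pred I) (F : I -> K) :
  (forall i, P i -> Wp (F i)) -> Wp (\sum_(i <- r | P i) F i).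
Proof. by move=> h; apply: big_ind => //; [exact: Wp0 | exact: WpD]. Qed.
Lemma WpT z g : Wp z -> Wp (T g * z).
Proof.
move=> [w [hw ->]].
exists (fun l => \sum_(h : gT) w h * se (g * l^-1)%g (h * l^-1)%g); split.
  move=> l; apply: Lf_sum => h _; apply: LfM => //; apply: Lf_B; exact: B_sigma_e.
rewrite mulr_sumr.
under eq_bigr => h _ do rewrite mulrCA qrel mulr_sumr.
rewrite exchange_big /=; apply: eq_bigr => l _.
by rewrite mulr_suml; apply: eq_bigr => h _; rewrite mulrA.
Qed.
Lemma Wp1 : Wp 1.
Proof.
exists (fun _ => Ssum^-1); split; first by move=> h; apply: LfV; apply: Lf_B; exact: B_Ssum.
by rewrite -mulr_sumr -/Ssum mulVf // Ssum_nz.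
Qed.
Lemma WpM x y : Wp x -> Wp y -> Wp (x * y).
Proof.
move=> [w [hw ->]] hy; rewrite mulr_suml; apply: Wp_sum => h _.
by rewrite -mulrA; apply: WpL => //; apply: WpT.
Qed.
Lemma Wp_tau g : Wp (T g).
Proof. by rewrite -[T g]mulr1; apply: WpT; exact: Wp1. Qed.

Lemma Wp_poly (p : {mpoly k[n]}) : Wp (tofrac p).
Proof.
elim/mpolyind: p => [|c m p _ _ IH]; first by rewrite tofrac0; exact: Wp0.
rewrite tofracD; apply: WpD => //.
rewrite -mul_mpolyC tofracM; apply: WpL; first by apply: Lf_B; exact: B_kc.
rewrite mpolyXE_id rmorph_prod; apply: big_ind; [by rewrite -tofrac1 ?tofrac1; exact: Wp1| exact: WpM|].
move=> i _; rewrite rmorphXn.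
have h : Wp (T (enum_val i) ^+ m i).
  elim: (m i) => [|e IHe]; first by rewrite expr0; exact: Wp1.
  by rewrite exprS; apply: WpM => //; exact: Wp_tau.
by move: h; rewrite /tau enum_valK => h; exact: h.
Qed.

End Core.

Section Rho.
Variables (k : fieldType) (gT : finGroupType).
Local Notation n := #|gT|.
Local Notation K := (Ktau k gT).
Local Notation T := (@tau k gT).
Local Notation Y := (@tauinv k gT).
Local Notation B := (@generic_base_algebra k gT).
Local Notation kc := (@kconst k n).
Local Notation se := (@sigma_e k gT).
Local Notation sei := (@sigmainv_e k gT).
Local Notation Lf := (Lfg B).

Definition rho (c : gT) (z : K) : K := E invg (E (mulg c) (E invg z)).

Let iK : cancel (@invg gT) invg := @invgK gT.

Section C.
Variable c : gT.
Let mK : cancel (mulg c) (mulg c^-1) := mulKg c.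

Lemma rhoD x y : rho c (x + y) = rho c x + rho c y.
Proof. by rewrite /rho (ED iK) (ED mK) (ED iK). Qed.
Lemma rhoM x y : rho c (x * y) = rho c x * rho c y.
Proof. by rewrite /rho (EM iK) (EM mK) (EM iK). Qed.
Lemma rho0 : rho c 0 = 0.
Proof. by rewrite /rho (@E0 k gT _ _ iK) (@E0 k gT _ _ mK) (@E0 k gT _ _ iK). Qed.
Lemma rho1 : rho c 1 = 1.
Proof. by rewrite /rho (@E1 k gT _ _ iK) (@E1 k gT _ _ mK) (@E1 k gT _ _ iK). Qed.
Lemma rhoV x : rho c x^-1 = (rho c x)^-1.
Proof. by rewrite /rho (EV iK) (EV mK) (EV iK). Qed.
Lemma rho_div x y : rho c (x / y) = rho c x / rho c y.
Proof. by rewrite rhoM rhoV. Qed.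
Lemma rho_kc a : rho c (kc a) = kc a.
Proof. by rewrite /rho (E_kconst iK) (E_kconst mK) (E_kconst iK). Qed.
Lemma rho_nat (b : bool) : rho c b%:R = b%:R.
Proof. by case: b; rewrite ?rho1 ?rho0. Qed.
Lemma rho_sum (I : Type) (r : seq I) (P : pred I) (F : I -> K) :
  rho c (\sum_(i <- r | P i) F i) = \sum_(i <- r | P i) rho c (F i).
Proof. exact: (big_morph _ rhoD rho0). Qed.
Lemma rho_tau g : rho c (T g) = T (g * c^-1)%g.
Proof. by rewrite /rho (@E_tau k gT _ _ iK) (@E_tau k gT _ _ mK) (@E_tau k gT _ _ iK) invMg invgK. Qed.
Lemma rho_if (b : bool) x : rho c (if b then x else 0) = if b then rho c x else 0.
Proof. by case: b; rewrite ?rho0. Qed.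

Lemma rho_Y h : rho c (Y h) = Y (c * h)%g.
Proof.
pose T' := fun g => rho c (T g).
pose Y' := fun g => rho c (Y g).
pose Y'' := fun g => Y (c * g)%g.
have hL : conv Y' T' =1 @d1 k gT.
  move=> g; have := congr1 (rho c) (@YL k gT g); rewrite /conv /d1 rho_sum rho_nat => <-.
  by apply: eq_bigr => l _; rewrite rhoM.
have h2 : conv T' Y'' =1 @d1 k gT.
  move=> g; rewrite /conv -(@YR k gT g) /conv (reindex_inj (@mulgI _ (c^-1)%g)) /=.
  by apply: eq_bigr => l _; rewrite /T' /Y'' rho_tau mulKVg invMg invgK !mulgA mulgK.
have e1 : conv Y' (conv T' Y'') =1 conv Y' (@d1 k gT) := conv_ext (frefl _) h2.
have e2 : conv (conv Y' T') Y'' =1 conv (@d1 k gT) Y'' := conv_ext hL (frefl _).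
by move: (conv_assoc Y' T' Y'' h); rewrite e1 e2 conv_d1l conv_d1r.
Qed.

Lemma rho_se a b : rho c (se a b) = se a b.
Proof.
rewrite /sigma_e rho_sum (reindex_inj (@mulgI _ (c^-1)%g)) /=.
apply: eq_bigr => h _.
by rewrite !rhoM !rho_tau rho_Y mulKVg invMg invgK !mulgA !mulgK.
Qed.

Lemma rho_sei a b : rho c (sei a b) = sei a b.
Proof.
rewrite /sigmainv_e rho_sum (reindex_inj (@mulgI _ (c^-1)%g)) /=.
apply: eq_bigr => h _.
rewrite rho_sum (reindex_inj (@mulgI _ (c^-1)%g)) /=.
apply: eq_bigr => l _.
rewrite rho_if !rhoM rho_tau !rho_Y !mulKVg !invMg !invgK !mulgA !mulgK.
by rewrite (inj_eq (@mulIg _ c)).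
Qed.

Lemma rho_sigma x y : rho c (sigma x y) = sigma x y.
Proof.
rewrite /sigma rho_sum; apply: eq_bigr => a _.
rewrite rho_sum; apply: eq_bigr => b _.
by rewrite !rhoM !rho_kc rho_se.
Qed.

Lemma rho_sigmainv x y : rho c (sigmainv x y) = sigmainv x y.
Proof.
rewrite /sigmainv rho_sum; apply: eq_bigr => a _.
rewrite rho_sum; apply: eq_bigr => b _.
by rewrite !rhoM !rho_kc rho_sei.
Qed.

Lemma rho_B z : B z -> rho c z = z.
Proof.
move=> hz; apply: (hz (fun z => rho c z = z)).
  split.
  - exact: rho1.
  - by move=> x y hx hy; rewrite rhoD hx hy.
  - by move=> x y hx hy; rewrite rhoM hx hy.
  - by move=> a x hx; rewrite rhoM hx rho_kc.
by move=> s [x [y [->|->]]]; [exact: rho_sigma | exact: rho_sigmainv].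
Qed.

Lemma rho_L z : Lf z -> rho c z = z.
Proof. by move=> [p [q [hp [hq [_ ->]]]]]; rewrite rho_div !rho_B. Qed.

End C.
Lemma indep (v : gT -> K) :
  (forall c, \sum_(h : gT) v h * T (h * c^-1)%g = 0) -> forall h, v h = 0.
Proof.
move=> hv.
pose u := fun l : gT => v (l^-1)%g.
have hu : conv u T =1 (fun _ => 0).
  move=> g; rewrite -[RHS](hv (g^-1)%g) /conv (reindex_inj (@mulIg _ g)) /=.
  by apply: eq_bigr => h _; rewrite /u invMg !invgK mulgK.
have u0 : u =1 (fun _ => 0).
  move=> g; rewrite -conv_d1r.
  rewrite (conv_ext (frefl u) (fun x => esym (@YR k gT x))).
  rewrite -conv_assoc (conv_ext hu (frefl _)) /conv.
  by rewrite big1 // => h _; rewrite mul0r.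
by move=> h; rewrite -[h]invgK; exact: u0.
Qed.

Lemma inv_L z : (forall c, rho c z = z) -> Lf z.
Proof.
move=> hz.
have [A [D [D0 ez]]] := frac_ex z.
have [a [ha eA]] := Wp_poly A.
have [b [hb eD]] := Wp_poly D.
have tD : tofrac D != 0 by rewrite tofrac_eq0.
have ezD : tofrac A = z * tofrac D by rewrite ez divfK.
have key : forall c, \sum_(h : gT) (a h - z * b h) * T (h * c^-1)%g = 0.
  move=> c; have := congr1 (rho c) ezD.
  rewrite rhoM (hz c) eA eD !rho_sum.
  have ea : \sum_(h : gT) rho c (a h * T h) = \sum_(h : gT) a h * T (h * c^-1)%g.
    by apply: eq_bigr => h _; rewrite rhoM rho_tau (rho_L c (ha h)).
  have eb : \sum_(h : gT) rho c (b h * T h) = \sum_(h : gT) b h * T (h * c^-1)%g.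
    by apply: eq_bigr => h _; have hh := rho_L c (hb h); rewrite rhoM rho_tau hh.
  move=> e0; have e := etrans (esym ea) (etrans e0 (congr1 (fun X => z * X) eb)).
  under eq_bigr => h _ do rewrite mulrBl -mulrA.
  by rewrite sumrB -mulr_sumr e subrr.
have hv := indep key.
have [h bh] : exists h, b h != 0.
  case: (pickP (fun h => b h != 0)) => [h bh|none]; first by exists h.
  move: tD; rewrite eD big1 ?eqxx // => h _.
  by move: (none h) => /negbFE /eqP ->; rewrite mul0r.
have e : a h = z * b h by apply/eqP; rewrite -subr_eq0; apply/eqP; exact: hv h.
have -> : z = a h / b h by rewrite e mulfK.
by apply: Lf_div; [exact: ha | exact: hb].
Qed.

End Rho.

Theorem proposition4p2 (k : fieldType) (gT : finGroupType) :
  (exists (m : nat) (T : {mpoly k[m]} -> Prop) (f : Ktau k gT -> ratfun k m),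
      mult_subset T /\
      kalg_iso (@kconst k #|gT|) (@kconst k m)
        (@generic_base_algebra k gT) (localization T) f) ->
  purely_transcendental (@kconst k #|gT|) (@invariant_field k gT).
Proof.
move=> [m [T0 [f [hT hiso]]]].
case: hT => T1 TM T0n.
case: hiso => fB finj fsurj f1 fops.
set B := @generic_base_algebra k gT in fB finj fsurj fops *.
have gex : forall p : {mpoly k[m]}, exists x, B x /\ f x = tofrac p.
  move=> p; have loc : localization T0 (tofrac p).
    by exists p, 1; split => //; rewrite tofrac1 divr1.
  by have [x hx e] := fsurj _ loc; exists x.
pose gp := fun p => proj1_sig (constructive_indefinite_description _ (gex p)).
have hgB : forall p, B (gp p) by move=> p; rewrite /gp; case: constructive_indefinite_description => x [].
have hgf : forall p, f (gp p) = tofrac p by move=> p; rewrite /gp; case: constructive_indefinite_description => x [].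
have gD : forall p q, gp (p + q) = gp p + gp q.
  move=> p q; apply: finj; [exact: hgB | exact: (@BD k gT _ _ (hgB p) (hgB q)) |].
  by have [-> _ _] := fops _ _ 0 (hgB p) (hgB q); rewrite !hgf tofracD.
have gM : forall p q, gp (p * q) = gp p * gp q.
  move=> p q; apply: finj; [exact: hgB | exact: (@BM k gT _ _ (hgB p) (hgB q)) |].
  by have [_ -> _] := fops _ _ 0 (hgB p) (hgB q); rewrite !hgf tofracM.
have g1 : gp 1 = 1.
  by apply: finj; [exact: hgB | exact: (@B1 k gT) | rewrite hgf f1 tofrac1].
have ginj : injective gp.
  by move=> p q e; apply: tofrac_inj; rewrite -!hgf e.
pose Phi := liftf gp.
have PhiD := liftfD gD gM ginj.
have PhiM := liftfM gD gM ginj.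
have Phi1 := liftf1 gD gM g1 ginj.
have PhiI := @liftf_inj _ _ _ gD gM ginj.
have PhiV := liftfV gD gM g1 ginj.
have PhiL : forall x, Lfg B (Phi x).
  move=> x; have [a [b [b0 ->]]] := frac_ex x.
  rewrite /Phi (liftf_frac gD gM ginj _ b0).
  by apply: Lf_div; apply: Lf_B; exact: hgB.
have Phi_kc : forall c, Phi (kconst m c) = kconst #|gT| c.
  move=> c; rewrite /Phi [kconst m c]/kconst (liftf_tofrac gD gM g1 ginj).
  apply: finj; [exact: hgB | exact: (@B_kc k gT c) |].
  rewrite hgf -[kconst #|gT| c]mulr1.
  by have [_ _ ->] := fops 1 1 c (@B1 k gT) (@B1 k gT); rewrite f1 mulr1.
have Phi_f : forall x, B x -> Phi (f x) = x.
  move=> x hx; have [p [t [Tt ex]]] := fB x hx.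
  have t0 : t != 0 by apply/eqP => e; apply: T0n; rewrite -e.
  have e : gp t * x = gp p.
    apply: finj; [exact: (@BM k gT _ _ (hgB t) hx) | exact: hgB |].
    have [_ -> _] := fops _ _ 0 (hgB t) hx.
    rewrite ex !hgf mulrC divfK //; by rewrite tofrac_eq0.
  rewrite ex /Phi (liftf_frac gD gM ginj _ t0) -e [gp t * x]mulrC mulfK //.
  exact: (gnz gD ginj t0).
exists m, (fun x => E invg (Phi x)).
have actE : forall (c : gT) (z : Ktau k gT), act c (E invg z) = E invg (rho c z).
  by move=> c z; rewrite /rho E_invK.
have iK : cancel (@invg gT) invg := @invgK gT.
split.
- by move=> x _ c; rewrite actE (rho_L c (PhiL x)).
- by move=> x y _ _ /(E_inj iK) /PhiI.
- move=> z hz.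
  have hw : forall c, rho c (E invg z) = E invg z.
    by move=> c; rewrite /rho E_invK; congr (E invg _); exact: hz c.
  have [p [q [hp [hq [q0 ew]]]]] := inv_L hw.
  exists (f p / f q) => //.
  rewrite /Phi PhiM PhiV -/Phi !Phi_f // -ew; exact: E_invK.
- by rewrite /Phi Phi1 (@E1 k gT _ _ iK).
- move=> x y c _ _; split.
  + by rewrite /Phi PhiD (ED iK).
  + by rewrite /Phi PhiM (EM iK).
  + by rewrite /Phi PhiM (EM iK) -/Phi Phi_kc (E_kconst iK).
Qed.
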